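(* Let $\Sigma$ be an alphabet. The mapping $F$ sending a partial probabilistic system $(S,i,Supp,\mu)$ to its underlying transition system $(S,i,Supp)$, and a morphism to its underlying function, is a functor $F:\mathbf{Prob}_{\Sigma}\to\mathbf{TS}_{\Sigma}$, and this functor is a coreflection.
   Context: $\mathbf{TS}_{\Sigma}$: objects are transition systems $(S,i,\Delta)$ with $i\in S$, $\Delta\subseteq S\times\Sigma\times S$; morphisms are functions $f$ on states with $f(i)=i'$ and $(f(s),a,f(s'))\in\Delta'$ for all $(s,a,s')\in\Delta$. A partial probabilistic system is a quadruple $(S,i,Supp,\mu)$ where $(S,i,Supp)$ is a transition system (the support relation $Supp\subseteq S\times\Sigma\times S$) and $\mu:Supp\to[0,1]$ is such that for every $s\in S$ and $a\in\Sigma$, the set $\{t\mid\mu(s,a,t)>0\}$ is finite and $\sum_{(s,a,t)\in Supp}\mu(s,a,t)\le1$. A morphism $(S,i,Supp,\mu)\to(S',i',Supp',\mu')$ is a morphism $f$ of the underlying transition systems such that for every $(s,a,t)\in Supp$, $\sum_{(s,a,t')\in Supp,\ f(t')=f(t)}\mu(s,a,t')\le\mu'(f(s),a,f(t))$. These form the category $\mathbf{Prob}_{\Sigma}$. A functor is a coreflection if it is a right adjoint whose left adjoint is fully faithful (equivalently, a right adjoint whose adjunction unit is a natural isomorphism). *)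

(* Defs.v *)
From Stdlib Require Import Reals List.
Open Scope R_scope.
Set Implicit Arguments.

Record TS (Sigma : Type) := mkTS {
  st : Type;
  init : st;
  trans : st -> Sigma -> st -> Prop }.
Arguments st {Sigma}.
Arguments init {Sigma}.
Arguments trans {Sigma}.

Definition is_ts_mor {Sigma} (A B : TS Sigma) (f : st A -> st B) : Prop :=
  f (init A) = init B /\
  forall s a t, trans A s a t -> trans B (f s) a (f t).

Definition lsum {T} (w : T -> R) (l : list T) : R :=
  fold_right (fun x acc => w x + acc) 0 l.

Definition finite_pred {T} (P : T -> Prop) : Prop :=
  exists l : list T, forall x, P x -> In x l.

(** "sum_{x | P x} w x <= c" for a weight w that is nonnegative on P: every
    finite partial sum (over distinct elements of P) is bounded by c. *)
Definition sum_le {T} (P : T -> Prop) (w : T -> R) (c : R) : Prop :=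
  forall l : list T, NoDup l -> (forall x, In x l -> P x) -> lsum w l <= c.

(** Partial probabilistic systems (S, i, Supp, mu).  mu is given as a total
    function on S x Sigma x S, but only its values on Supp are ever used. *)
Record Prob (Sigma : Type) := mkProb {
  pts : TS Sigma;
  mu : st pts -> Sigma -> st pts -> R;
  mu_range : forall s a t, trans pts s a t -> 0 <= mu s a t <= 1;
  mu_fin : forall s a, finite_pred (fun t => trans pts s a t /\ 0 < mu s a t);
  mu_sum : forall s a, sum_le (fun t => trans pts s a t) (fun t => mu s a t) 1 }.
Arguments pts {Sigma}.
Arguments mu {Sigma}.

Definition is_prob_mor {Sigma} (P Q : Prob Sigma) (f : st (pts P) -> st (pts Q)) : Prop :=
  is_ts_mor (pts P) (pts Q) f /\
  forall s a t, trans (pts P) s a t ->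
    sum_le (fun t' => trans (pts P) s a t' /\ f t' = f t)
           (fun t' => mu P s a t') (mu Q (f s) a (f t)).

Definition F_ob {Sigma} (P : Prob Sigma) : TS Sigma := pts P.
Definition F_mor {Sigma} (P Q : Prob Sigma) (f : st (pts P) -> st (pts Q))
  : st (F_ob P) -> st (F_ob Q) := f.

(* Main.v *)
Require Import Defs.
From Stdlib Require Import Reals List Lra Lia ClassicalEpsilon.

Lemma lsum_split {T} (w : T -> R) (p : T -> bool) (l : list T) :
  lsum w l = lsum w (filter p l) + lsum w (filter (fun x => negb (p x)) l).
Proof.
  induction l as [|x l IH]; simpl. lra.
  destruct (p x); simpl; rewrite IH; lra.
Qed.

Lemma lsum_zero {T} (l : list T) : lsum (fun _ => 0) l = 0.
Proof. induction l; simpl; [lra| rewrite IHl; lra]. Qed.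

Lemma group_lemma {T U} (P : T -> Prop) (Q : U -> Prop) (w : T -> R) (c : U -> R)
  (f : T -> U) (C : R) :
  (forall x, P x -> sum_le (fun y => P y /\ f y = f x) w (c (f x))) ->
  (forall x, P x -> Q (f x)) ->
  sum_le Q c C ->
  forall n l m, (length l <= n)%nat -> NoDup l -> (forall x, In x l -> P x) ->
    NoDup m -> (forall u, In u m -> Q u) ->
    (forall x, In x l -> ~ In (f x) m) ->
    lsum w l + lsum c m <= C.
Proof.
  intros Hw HQ HC n. induction n as [|n IH]; intros l m Hlen Hl HP Hm HQm Hdis.
  - destruct l; simpl in Hlen; [|lia]. simpl. specialize (HC m Hm HQm). lra.
  - destruct l as [|x rest].
    + simpl. specialize (HC m Hm HQm). lra.
    + set (p := fun y => if excluded_middle_informative (f y = f x) then true else false).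
      rewrite (lsum_split w p).
      set (l1 := filter p (x :: rest)).
      set (l2 := filter (fun y => negb (p y)) (x :: rest)).
      assert (H1 : lsum w l1 <= c (f x)).
      { apply Hw. apply HP; simpl; auto.
        apply NoDup_filter; auto.
        intros y Hy. unfold l1 in Hy. apply filter_In in Hy as [Hy Hpy].
        split. apply HP; auto. unfold p in Hpy.
        destruct (excluded_middle_informative (f y = f x)); auto; discriminate. }
      assert (H2 : lsum w l2 + lsum c (f x :: m) <= C).
      { apply IH.
        - unfold l2. simpl. unfold p at 1.
          destruct (excluded_middle_informative (f x = f x)) as [_|ne]; [|congruence].
          simpl. simpl in Hlen. pose proof (filter_length_le (fun y => negb (p y)) rest). lia.
        - apply NoDup_filter; auto.
        - intros y Hy. unfold l2 in Hy. apply filter_In in Hy as [Hy _]. auto.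
        - constructor; auto. apply Hdis; simpl; auto.
        - intros u [<-|Hu]; auto. apply HQ, HP; simpl; auto.
        - intros y Hy. unfold l2 in Hy. apply filter_In in Hy as [Hy Hpy].
          intros [Heq|Hin].
          + unfold p in Hpy. destruct (excluded_middle_informative (f y = f x)); [discriminate|congruence].
          + exact (Hdis y Hy Hin). }
      simpl in H2. fold l1 l2. lra.
Qed.
Theorem theorem2 (Sigma : Type) :
  (* Prob_Sigma is a category (identities and composites are morphisms) and
     F is a functor: it sends morphisms to TS-morphisms, preserving identities
     and composition (F_mor of the identity/composite is the identity/composite). *)
  ((forall P : Prob Sigma, is_prob_mor P P (fun x => x)) /\
   (forall (P Q U : Prob Sigma) f g,
       is_prob_mor P Q f -> is_prob_mor Q U g -> is_prob_mor P U (fun x => g (f x))) /\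
   (forall (P Q : Prob Sigma) f,
       is_prob_mor P Q f -> is_ts_mor (F_ob P) (F_ob Q) (F_mor P Q f)) /\
   (forall P : Prob Sigma, forall x, F_mor P P (fun y => y) x = x) /\
   (forall (P Q U : Prob Sigma) f g x,
       F_mor P U (fun y => g (f y)) x = F_mor Q U g (F_mor P Q f x))) /\
  (* F is a coreflection: it has a left adjoint G (given by universal arrows
     eta_T : T -> F (G T)) whose unit eta is a natural isomorphism. *)
  (exists (G : TS Sigma -> Prob Sigma)
          (eta : forall T : TS Sigma, st T -> st (F_ob (G T))),
     (forall T : TS Sigma, is_ts_mor T (F_ob (G T)) (eta T)) /\
     (forall (T : TS Sigma) (P : Prob Sigma) (f : st T -> st (F_ob P)),
        is_ts_mor T (F_ob P) f ->
        exists g : st (pts (G T)) -> st (pts P),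
          is_prob_mor (G T) P g /\
          (forall x, F_mor (G T) P g (eta T x) = f x) /\
          (forall g' : st (pts (G T)) -> st (pts P),
             is_prob_mor (G T) P g' ->
             (forall x, F_mor (G T) P g' (eta T x) = f x) ->
             forall y, g' y = g y)) /\
     (forall T : TS Sigma,
        exists inv : st (F_ob (G T)) -> st T,
          is_ts_mor (F_ob (G T)) T inv /\
          (forall x, inv (eta T x) = x) /\
          (forall y, eta T (inv y) = y))).
Proof.
  split.
  { split; [|split; [|split; [|split]]].
    - intros P. split. split; auto.
      intros s a t Ht l Hl Hin. destruct l as [|x l]; simpl.
      + destruct (mu_range P s a t Ht). lra.
      + assert (x = t) by (apply Hin; simpl; auto). subst x.
        destruct l as [|y l].
        * simpl. lra.
        * assert (y = t) by (apply Hin; simpl; auto). subst y.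
          inversion Hl. simpl in *. tauto.
    - intros P Q U f g [[Hf0 Hf1] Hf] [[Hg0 Hg1] Hg]. split.
      + split. rewrite Hf0; auto. auto.
      + intros s a t Ht l Hl Hin.
        pose proof (@group_lemma _ _ (fun t' => trans (pts P) s a t' /\ g (f t') = g (f t))
          (fun u => trans (pts Q) (f s) a u /\ g u = g (f t)) (mu P s a) (mu Q (f s) a) f
          (mu U (g (f s)) a (g (f t)))) as HG.
        assert (Hr := HG ltac:(intros x [Hx Hgx] l' Hl' Hin'; apply (Hf s a x Hx l' Hl');
                                intros y Hy; destruct (Hin' y Hy) as [[Hy1 _] Hy2]; auto)
                         ltac:(intros x [Hx Hgx]; auto)
                         ltac:(apply Hg; apply Hf1; auto)
                         (length l) l nil).
        simpl in Hr. cut (lsum (fun t' => mu P s a t') l + 0 <= mu U (g (f s)) a (g (f t))). lra.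
        apply Hr; [lia|auto|auto|constructor|tauto|tauto].
    - intros P Q f [H _]. exact H.
    - reflexivity.
    - reflexivity. }
  exists (fun T => @mkProb Sigma T (fun _ _ _ => 0)
            (fun s a t _ => conj (Rle_refl 0) Rle_0_1)
            (fun s a => ex_intro (fun l : list (st T) => forall x, _ -> In x l) nil (fun t H => Rlt_irrefl 0 (proj2 H)))
            (fun s a l _ _ => eq_ind_r (fun r => r <= 1) Rle_0_1 (lsum_zero l))).
  exists (fun T x => x).
  split; [|split].
  - intros T. split; simpl; auto.
  - intros T P f Hf. exists f. split; [|split].
    + split. exact Hf. intros s a t Ht l _ _. simpl. rewrite lsum_zero.
      destruct Hf as [_ Hf]. destruct (mu_range P _ _ _ (Hf _ _ _ Ht)). lra.
    + reflexivity.
    + intros g' _ Hg' y. apply Hg'.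
  - intros T. exists (fun x => x). split; [|split]; auto. split; simpl; auto.
Qed.
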